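(* Let $\mathcal X\subseteq\mathbb R^n$, $\bm c\in\mathbb R^n$, $\varepsilon\in(0,1)$, scenarios $\bm\xi^1,\dots,\bm\xi^N$ with probabilities $p_1,\dots,p_N\ge0$, $\sum_i p_i=1$, and $g(\bm x,\bm\xi)=\max_{j\in[J]}g_j(\bm x,\bm\xi)$. Consider the chance-constrained program $$v^*=\min_{\bm x\in\mathcal X}\Big\{\bm c^\top\bm x:\ \sum_{i=1}^N p_i\,\mathbb I[g(\bm x,\bm\xi^i)\le 0]\ge 1-\varepsilon\Big\},$$ let $\bm x^*$ be an optimal solution, and define $I^*=\{i\in[N]: g(\bm x^*,\bm\xi^i)<0\}$. Suppose $\sum_{i\in I^*}p_i>1-\varepsilon$. Then $v^*=v^{\mathrm{CVaR}}_S$, and there exist $\widehat{\bm\alpha}\ge\bm e$, $\widehat\beta\le 0$, $\widehat{\bm s}\ge\bm 0$ such that $v^{\mathrm{CVaR}}_S=v^{\mathrm{CVaR}}(\widehat{\bm\alpha})$ and $(\bm x^*,\widehat\beta,\widehat{\bm s},\widehat{\bm\alpha})$ is an optimal solution of the optimally scaled CVaR approximation $$v^{\mathrm{CVaR}}_S=\inf_{\bm x\in\mathcal X,\beta\le0,\bm s\ge\bm0,\bm\alpha\ge\bm e}\Big\{\bm c^\top\bm x:\ \varepsilon\beta+\sum_{i=1}^Np_is_i\le0,\ s_i+\beta\ge\alpha_ig(\bm x,\bm\xi^i),\ i\in[N]\Big\}.$$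
   Context: $\mathbb I[\cdot]$ is the indicator function, $\bm e$ the all-ones vector, $[N]=\{1,\dots,N\}$. For $\bm\alpha\ge\bm e$, $v^{\mathrm{CVaR}}(\bm\alpha)=\min_{\bm x\in\mathcal X,\beta\le0,\bm s\ge\bm0}\{\bm c^\top\bm x:\ \varepsilon\beta+\sum_i p_is_i\le0,\ s_i+\beta\ge\alpha_i g(\bm x,\bm\xi^i),\ i\in[N]\}$ (value $+\infty$ if infeasible), and $v^{\mathrm{CVaR}}_S=\inf_{\bm\alpha\ge\bm e}v^{\mathrm{CVaR}}(\bm\alpha)$. *)

(* Defs.v *)
From mathcomp Require Import all_boot all_order all_algebra.
From mathcomp Require Import boolp classical_sets reals ereal.
Set Implicit Arguments. Unset Strict Implicit. Unset Printing Implicit Defensive.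
Import Order.TTheory GRing.Theory Num.Theory.
Local Open Scope classical_set_scope.
Local Open Scope ring_scope.

Section CVaR.
Variable R : realType.

Definition dotr n (c x : 'rV[R]_n) : R := \sum_(k < n) c 0 k * x 0 k.

Definition gmax n (T : Type) J (hJ : (0 < J)%N)
  (gs : 'I_J -> 'rV[R]_n -> T -> R) (x : 'rV[R]_n) (xi : T) : R :=
  \big[Num.max/gs (Ordinal hJ) x xi]_(j < J) gs j x xi.

Definition cc_feasible n N (g : 'rV[R]_n -> 'I_N -> R) (p : 'I_N -> R)
  (eps : R) (X : set 'rV[R]_n) (x : 'rV[R]_n) : Prop :=
  X x /\ 1 - eps <= \sum_(i < N | g x i <= 0) p i.

Definition cvar_feasible n N (g : 'rV[R]_n -> 'I_N -> R) (p : 'I_N -> R)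
  (eps : R) (X : set 'rV[R]_n) (x : 'rV[R]_n) (beta : R) (s alpha : 'I_N -> R)
  : Prop :=
  [/\ X x, beta <= 0, (forall i, 0 <= s i),
      eps * beta + \sum_(i < N) p i * s i <= 0 &
      forall i, alpha i * g x i <= s i + beta].

(* v^CVaR(alpha) (inf over an empty set is +oo) *)
Definition vCVaR n N (c : 'rV[R]_n) (g : 'rV[R]_n -> 'I_N -> R) (p : 'I_N -> R)
  (eps : R) (X : set 'rV[R]_n) (alpha : 'I_N -> R) : \bar R :=
  ereal_inf [set (dotr c x)%:E | x in
    [set x | exists beta s, cvar_feasible g p eps X x beta s alpha]].

Definition vCVaR_S n N (c : 'rV[R]_n) (g : 'rV[R]_n -> 'I_N -> R)
  (p : 'I_N -> R) (eps : R) (X : set 'rV[R]_n) : \bar R :=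
  ereal_inf [set vCVaR c g p eps X alpha | alpha in
    [set alpha : 'I_N -> R | forall i, 1 <= alpha i]].

End CVaR.

(* Main.v *)
Require Import Defs.
From mathcomp Require Import all_boot all_order all_algebra.
From mathcomp Require Import boolp classical_sets reals ereal.
From mathcomp Require Import lra.
Import Order.TTheory GRing.Theory Num.Theory.
Local Open Scope classical_set_scope.
Local Open Scope ring_scope.

Lemma cvar_cc (R : realType) n N (g : 'rV[R]_n -> 'I_N -> R) (p : 'I_N -> R)
  eps X x beta s alpha :
  0 <= eps -> (forall i, 0 <= p i) -> \sum_(i < N) p i = 1 -> (forall i, 1 <= alpha i) ->
  cvar_feasible g p eps X x beta s alpha -> cc_feasible g p eps X x.
Proof.
move=> e0 p0 p1 a1 [Xx b0 s0 hsum hc]; split => //.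
have viol : forall i, ~~ (g x i <= 0) -> - beta < s i.
  move=> i; rewrite -ltNge => gi.
  have := hc i; have := a1 i => ai hi.
  have : g x i <= alpha i * g x i by rewrite ler_peMl // ltW.
  lra.
set V := \sum_(i < N | ~~ (g x i <= 0)) p i.
have split1 : \sum_(i < N) p i = \sum_(i < N | g x i <= 0) p i + V by rewrite (bigID (fun i => g x i <= 0)).
have ps0 : \sum_(i < N | ~~ (g x i <= 0)) p i * s i <= \sum_(i < N) p i * s i.
  rewrite [X in _ <= X](bigID (fun i => g x i <= 0)) /= lerDr.
  by apply: sumr_ge0 => i _; rewrite mulr_ge0.
suff : V <= eps by lra.
have [bz|bn] := eqVneq beta 0.
  have h0 : \sum_(i < N | ~~ (g x i <= 0)) p i * s i = 0.
    apply/eqP; rewrite eq_le sumr_ge0 ?andbT; last by move=> i _; rewrite mulr_ge0.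
    move: hsum; rewrite bz mulr0 add0r => h; exact: le_trans ps0 h.
  have hp := psumr_eq0P (fun i _ => mulr_ge0 (p0 i) (s0 i)) h0.
  rewrite /V big1; first by lra.
  move=> i vi; have := hp i vi; have := viol i vi; rewrite bz oppr0 => si.
  by move/eqP; rewrite mulf_eq0 (gt_eqF si) orbF => /eqP.
have bl : 0 < - beta by rewrite oppr_gt0 lt_neqAle bn.
have : - beta * V <= - beta * eps.
  have : - beta * V <= \sum_(i < N | ~~ (g x i <= 0)) p i * s i.
    rewrite /V mulr_sumr; apply: ler_sum => i vi.
    by rewrite mulrC ler_wpM2l // ltW // viol.
  lra.
by rewrite ler_pM2l.
Qed.

Theorem theorem1 (R : realType) (n N J : nat) (hJ : (0 < J)%N)
  (Xi : Type) (X : set 'rV[R]_n) (c : 'rV[R]_n) (eps : R)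
  (xi : 'I_N -> Xi) (p : 'I_N -> R)
  (gs : 'I_J -> 'rV[R]_n -> Xi -> R) (xstar : 'rV[R]_n) :
  0 < eps < 1 ->
  (forall i, 0 <= p i) ->
  \sum_(i < N) p i = 1 ->
  let g := fun x i => gmax hJ gs x (xi i) in
  (* x* is an optimal solution of the chance-constrained program *)
  cc_feasible g p eps X xstar ->
  (forall x, cc_feasible g p eps X x -> dotr c xstar <= dotr c x) ->
  (* sum_{i in I*} p_i > 1 - eps, I* = {i : g(x*, xi^i) < 0} *)
  1 - eps < \sum_(i < N | g xstar i < 0) p i ->
  (dotr c xstar)%:E = vCVaR_S c g p eps X /\
  exists (alpha : 'I_N -> R) (beta : R) (s : 'I_N -> R),
    [/\ (forall i, 1 <= alpha i), beta <= 0, (forall i, 0 <= s i),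
        vCVaR_S c g p eps X = vCVaR c g p eps X alpha &
        (* (x*, beta, s, alpha) is optimal for the joint scaled CVaR problem *)
        (cvar_feasible g p eps X xstar beta s alpha /\
         forall x beta' s' alpha', (forall i, 1 <= alpha' i) ->
           cvar_feasible g p eps X x beta' s' alpha' ->
           dotr c xstar <= dotr c x)].
Proof.
move=> /andP[e0 e1] p0 p1 g [Xx _] opt hI.
clearbody g.
have lower : forall x beta' s' alpha', (forall i, 1 <= alpha' i) ->
    cvar_feasible g p eps X x beta' s' alpha' -> dotr c xstar <= dotr c x.
  move=> x b s a a1 f; apply: opt; exact: cvar_cc (ltW e0) p0 p1 a1 f.
set Q := \sum_(i < N | ~~ (g xstar i < 0)) p i.
have sp : \sum_(i < N) p i = \sum_(i < N | g xstar i < 0) p i + Q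
  by rewrite (bigID (fun i => g xstar i < 0)).
have d0 : 0 < eps - Q by lra.
set G := \sum_(i < N | ~~ (g xstar i < 0)) p i * g xstar i.
have G0 : 0 <= G.
  by apply: sumr_ge0 => i; rewrite -leNgt => gi; rewrite mulr_ge0.
set t := G / (eps - Q).
have t0 : 0 <= t by rewrite divr_ge0 // ltW.
pose alpha i := if g xstar i < 0 then 1 + t / (- g xstar i) else 1.
pose s i := if g xstar i < 0 then 0 else g xstar i + t.
have a1 : forall i, 1 <= alpha i.
  move=> i; rewrite /alpha; case: ifP => gi //.
  by rewrite lerDl divr_ge0 // oppr_ge0 ltW.
have s0 : forall i, 0 <= s i.
  move=> i; rewrite /s; case: ifP => gi //.
  by rewrite addr_ge0 // leNgt gi.
have feas : cvar_feasible g p eps X xstar (- t) s alpha.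
  split => //.
  - by rewrite oppr_le0.
  - rewrite (bigID (fun i => g xstar i < 0)) /= big1; last first.
      by move=> i gi; rewrite /s gi mulr0.
    rewrite add0r.
    have -> : \sum_(i < N | ~~ (g xstar i < 0)) p i * s i = G + t * Q.
      rewrite /G /Q mulr_sumr -big_split /=; apply: eq_bigr => i gi.
      by rewrite /s (negbTE gi) mulrDr [p i * t]mulrC.
    have : t * (eps - Q) = G by rewrite /t mulfVK // gt_eqF.
    lra.
  - move=> i; rewrite /alpha /s; case: ifP => gi; last by lra.
    have gn : g xstar i != 0 by rewrite lt_eqF.
    have -> : (1 + t / - g xstar i) * g xstar i = g xstar i - t.
      by rewrite mulrDl mul1r invrN mulrN mulNr -mulrA mulVf // mulr1.
    lra.
have vA : vCVaR c g p eps X alpha = (dotr c xstar)%:E.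
  apply/eqP; rewrite eq_le; apply/andP; split.
    by apply: ereal_inf_lbound; exists xstar => //; exists (- t), s.
  apply: le_ereal_inf_tmp => _ [x [b [s' f]] <-].
  by rewrite lee_fin; exact: lower a1 f.
have vS : vCVaR_S c g p eps X = (dotr c xstar)%:E.
  apply/eqP; rewrite eq_le; apply/andP; split.
    by rewrite -vA; apply: ereal_inf_lbound; exists alpha.
  apply: le_ereal_inf_tmp => _ [a ha <-].
  apply: le_ereal_inf_tmp => _ [x [b [s' f]] <-].
  by rewrite lee_fin; exact: lower ha f.
split; first by rewrite vS.
exists alpha, (- t), s; split => //; first by rewrite oppr_le0.
by rewrite vS vA.
Qed.
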